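(* Let $k\ge 1$ and $n$ be integers with $kn$ even, and let $H^*\in\mathcal H$ be any $k$-factor on $[n]$. Then for every integer $0\le t\le kn/2$, $$\left|\{H\in\mathcal H:\ |H\triangle H^*|=2t\}\right|\;\le\;\binom{kn/2}{t}\frac{(2t)!}{2^t\,t!}\;\le\;\binom{kn/2}{t}2^t\,t!\;\le\;(kn)^t\,e^{-t(t-1)/(kn)}.$$
   Context: A $k$-factor on $[n]$ is a $k$-regular simple graph with vertex set $[n]$, identified with its edge set; $\mathcal H$ denotes the set of all $k$-factors on $[n]$. $\triangle$ denotes symmetric difference of edge sets. *)

(* Defs.v *)
From HB Require Import structures.
From mathcomp Require Import all_boot all_order all_algebra.
From mathcomp Require Import all_classical all_reals all_analysis.
Set Implicit Arguments. Unset Strict Implicit. Unset Printing Implicit Defensive.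

(* A simple graph on [n] = 'I_n is identified with its edge set: a set of
   2-element subsets of 'I_n.  A k-factor is a k-regular simple graph. *)
Definition kfactor (n k : nat) (H : {set {set 'I_n}}) : bool :=
  [forall e in H, #|e| == 2] && [forall v : 'I_n, #|[set e in H | v \in e]| == k].

Definition symdiff (T : finType) (A B : {set T}) : {set T} := (A :\: B) :|: (B :\: A).

(* Main.v *)
Require Import Defs.
From HB Require Import structures.
From mathcomp Require Import all_boot all_order all_algebra.
From mathcomp Require Import all_classical all_reals all_analysis.
From mathcomp Require Import zify ring.
Import Order.TTheory GRing.Theory Num.Theory.

Section Helpers.
Local Set Implicit Arguments. Local Unset Strict Implicit.

Lemma card_bigcup_le (I T : finType) (P : pred I) (F : I -> {set T}) :
  #|\bigcup_(i | P i) F i| <= \sum_(i | P i) #|F i|.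
Proof.
elim/big_rec2: _ => [|i X s _ h]; first by rewrite cards0.
apply: leq_trans (leq_card_setU _ _) _; exact: leq_add.
Qed.

Fixpoint dfact t := if t is t'.+1 then (2 * t' + 1) * dfact t' else 1.

Definition Yset n t (d : 'I_n -> nat) := [set A : {set {set 'I_n}} |
  [forall e in A, #|e| == 2] && (#|A| == t) && [forall u, #|[set e in A | u \in e]| == d u]].

Lemma key n t : forall d : 'I_n -> nat, #|Yset t d| <= dfact t.
Proof.
elim: t => [|t IH] d.
  have h1 : #|[set (finset.set0 : {set {set 'I_n}})]| = 1 by rewrite cards1.
  rewrite /= -h1.
  apply: subset_leq_card; apply/fintype.subsetP => A; rewrite !inE => /andP[/andP[_ /eqP/cards0_eq ->] _].
  by [].
have [->|[A0 HA0]] := set_0Vmem (Yset t.+1 d); first by rewrite cards0.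
move: HA0; rewrite inE => /andP[/andP[/forall_inP E0 /eqP C0] /forallP D0].
have [e0 e0A0] : exists e0, e0 \in A0 by apply/card_gt0P; rewrite C0.
have [v ve0] : exists v, v \in e0 by apply/card_gt0P; rewrite (eqP (E0 _ e0A0)).
set W := (\bigcup_(e in A0) e) :\ v.
have cW : #|W| <= (2 * t + 1).
  have vU : v \in \bigcup_(e in A0) e by apply/bigcupP; exists e0.
  have := card_bigcup_le (fun e => e \in A0) id.
  rewrite (eq_bigr (fun _ => 2)); last by move=> e /E0/eqP.
  rewrite sum_nat_const C0 (cardsD1 v) vU /W => h.
  rewrite add1n in h; lia.
pose dw (w : 'I_n) (u : 'I_n) := d u - (u == v) - (u == w).
have sub : Yset t.+1 d \subset
    \bigcup_(w in W) (fun B => [set v; w] |: B) @: Yset t (dw w).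
  apply/fintype.subsetP => A; rewrite inE => /andP[/andP[/forall_inP EA /eqP CA] /forallP DA].
  have dv : 0 < d v.
    rewrite -(eqP (D0 v)); apply/card_gt0P; exists e0; by rewrite inE e0A0.
  have [e] : exists e, e \in [set e in A | v \in e].
    by apply/card_gt0P; rewrite (eqP (DA v)).
  rewrite inE => /andP[eA ve].
  have [w [vw ee]] : exists w, v != w /\ e = [set v; w].
    have /cards2P [x [y [xy exy]]] := EA _ eA.
    move: ve; rewrite exy !inE => /orP[]/eqP ->.
      by exists y.
    by exists x; split; [rewrite eq_sym | rewrite finset.setUC].
  have wW : w \in W.
    rewrite !inE eq_sym vw /=; apply/bigcupP.
    have [e1] : exists e1, e1 \in [set e in A0 | w \in e].
      apply/card_gt0P; rewrite (eqP (D0 w)) -(eqP (DA w)); apply/card_gt0P.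
      by exists e; rewrite inE eA ee !inE eqxx orbT.
    by rewrite inE => /andP[? ?]; exists e1.
  apply/bigcupP; exists w => //; apply/imsetP; exists (A :\ e).
    rewrite inE; apply/andP; split; first (apply/andP; split).
    - by apply/forall_inP => e' /setD1P[_ /EA].
    - by move: CA; rewrite (cardsD1 e) eA add1n => -[->].
    - apply/forallP => u; rewrite /dw -(eqP (DA u)) -subnDA.
      have -> : [set e1 in A :\ e | u \in e1] = [set e1 in A | u \in e1] :\ e.
        by apply/setP => x; rewrite !inE andbA.
      rewrite [#|[set e1 in A | u \in e1]|](cardsD1 e) !inE eA ee !inE /=.
      have hb : ~~ ((u == v) && (u == w)).
        by apply/negP => /andP[/eqP uv /eqP uw]; move: vw; rewrite -uv uw eqxx.
      move: hb; case: (u == v); case: (u == w) => //= _.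
      + by rewrite addKn.
      + by rewrite addKn.
      + by rewrite subn0.
  by rewrite -ee finset.setD1K.
apply: leq_trans (subset_leq_card sub) _.
apply: leq_trans (card_bigcup_le _ _) _.
apply: (leq_trans (n := \sum_(w in W) dfact t)).
  by apply: leq_sum => w _; apply: leq_trans (leq_imset_card _ _) (IH _).
rewrite sum_nat_const /=; exact: leq_mul.
Qed.

End Helpers.

Lemma handshake n k (H : {set {set 'I_n}}) : kfactor k H -> (2 * #|H| = k * n)%N.
Proof.
case/andP => /forall_inP E /forallP Dg.
have h1 : forall v, #|[set e in H | v \in e]| = \sum_(e in H) (v \in e).
  move=> v; rewrite -sum1_card big_mkcond [RHS]big_mkcond; apply: eq_bigr => e _.
  by rewrite !inE; case: (e \in H); case: (v \in e).
have h2 : \sum_(v : 'I_n) #|[set e in H | v \in e]| = (k * n)%N.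
  rewrite (eq_bigr (fun _ => k)); last by move=> v _; apply/eqP.
  by rewrite sum_nat_const card_ord mulnC.
rewrite -h2 (eq_bigr (fun v => \sum_(e in H) (v \in e))); last by move=> v _; apply: h1.
rewrite exchange_big /=.
rewrite mulnC -sum_nat_const; apply: eq_bigr => e eH.
rewrite -(eqP (E _ eH)) -sum1_card big_mkcond; apply: eq_bigr => v _.
by case: (v \in e).
Qed.

Lemma count_bound n k (Hs : {set {set 'I_n}}) t : kfactor k Hs ->
  (#|[set H : {set {set 'I_n}} | kfactor k H & #|symdiff H Hs| == (2 * t)%N]|
    <= 'C(#|Hs|, t) * dfact t)%N.
Proof.
move=> kHs.
pose D (S : {set {set 'I_n}}) u := #|[set e in S | u \in e]|.
pose Ss := [set S : {set {set 'I_n}} | S \subset Hs & #|S| == t].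
have sub : [set H : {set {set 'I_n}} | kfactor k H & #|symdiff H Hs| == (2 * t)%N]
   \subset \bigcup_(S in Ss) (fun A => (Hs :\: S) :|: A) @: Yset t (D S).
  apply/fintype.subsetP => H; rewrite inE => /andP[kH /eqP cH].
  have hH := handshake _ _ _ kH; have hHs := handshake _ _ _ kHs.
  have c1 := cardsID Hs H; have c2 := cardsID H Hs.
  have c3 : #|symdiff H Hs| = (#|H :\: Hs| + #|Hs :\: H|)%N.
    rewrite /symdiff cardsU.
    have -> : (H :\: Hs) :&: (Hs :\: H) = finset.set0.
      by apply/setP => e; rewrite !inE; case: (e \in H); case: (e \in Hs).
    by rewrite cards0 subn0.
  have c4 : #|H :&: Hs| = #|Hs :&: H| by rewrite finset.setIC.
  have eHH : #|H| = #|Hs|.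
    by apply/eqP; rewrite -(eqn_pmul2l (isT : 0 < 2)) hH hHs.
  clear hH hHs.
  apply/bigcupP; exists (Hs :\: H).
    rewrite inE subsetDl /=; apply/eqP. rewrite c4 in c1. rewrite eHH -c2 in c1. rewrite cH in c3. move: c1 c3; set a := #|H :\: Hs|; set b := #|Hs :\: H|; set i := #|Hs :&: H|. lia.
  apply/imsetP; exists (H :\: Hs).
    rewrite inE; apply/andP; split; first (apply/andP; split).
    - case/andP: kH => /forall_inP E _.
      by apply/forall_inP => e; rewrite inE => /andP[_ /E].
    - apply/eqP; lia.
    - apply/forallP => u; apply/eqP; rewrite /D.
      case/andP: kH => _ /forallP/(_ u)/eqP dH.
      case/andP: kHs => _ /forallP/(_ u)/eqP dHs.
      have e1 := cardsID Hs [set e in H | u \in e].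
      have e2 := cardsID H [set e in Hs | u \in e].
      have -> : [set e in H :\: Hs | u \in e] = [set e in H | u \in e] :\: Hs.
        by apply/setP => e; rewrite !inE; case: (e \in H); case: (e \in Hs).
      have -> : [set e in Hs :\: H | u \in e] = [set e in Hs | u \in e] :\: H.
        by apply/setP => e; rewrite !inE; case: (e \in H); case: (e \in Hs).
      have e3 : [set e in H | u \in e] :&: Hs = [set e in Hs | u \in e] :&: H.
        apply/setP => e; rewrite !inE. by apply/idP/idP => /andP[/andP[x y] z]; rewrite x y z.
      rewrite e3 dH -dHs -e2 in e1; exact: addnI e1.
  by apply/setP => e; rewrite !inE; case: (e \in H); case: (e \in Hs).
apply: leq_trans (subset_leq_card sub) _.
apply: leq_trans (card_bigcup_le _ _) _.
apply: (leq_trans (n := \sum_(S in Ss) dfact t)).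
  by apply: leq_sum => S _; apply: leq_trans (leq_imset_card _ _) (key _ _).
by rewrite sum_nat_const /Ss cards_draws.
Qed.

Lemma dfact_fact t : ((2 * t)`! = dfact t * (2 ^ t * t`!))%N.
Proof.
elim: t => [|t IH] //.
have -> : (2 * t.+1 = (2 * t).+2)%N by lia.
rewrite !factS IH /= expnS. nia.
Qed.

Lemma dfact_le t : (dfact t <= 2 ^ t * t`!)%N.
Proof.
elim: t => [|t IH] //=.
rewrite factS expnS. nia.
Qed.


Local Open Scope ring_scope.

Lemma part3 (R : realType) m t : (t <= m)%N ->
  ((2 ^ t * m^_t)%N%:R : R) <= ((2 * m)%N%:R)^+t * expR (- ((t * (t - 1))%N%:R / (2 * m)%N%:R)).
Proof.
elim: t => [|t IH] tm.
  by rewrite ffactn0 mul0n mul0r oppr0 expR0 expr0 mulr1.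
have tm' : (t <= m)%N by lia.
have M0 : 0 < ((2 * m)%N%:R : R) by rewrite ltr0n; lia.
set M := ((2 * m)%N%:R : R) in M0 IH *.
have -> : (2 ^ t.+1 * m^_t.+1 = (2 ^ t * m^_t) * (2 * m - 2 * t))%N.
  rewrite ffactnSr expnS -mulnBr. nia.
have -> : (t.+1 * (t.+1 - 1) = t * (t - 1) + 2 * t)%N by case: t {IH tm tm'} => [|t] //; rewrite !subn1 /=; nia.
rewrite natrM natrD mulrDl opprD expRD exprS.
apply: (le_trans (ler_wpM2r (ler0n _ _) (IH tm'))).
set E := expR (- ((t * (t - 1))%:R / M)).
set F := expR (- ((2 * t)%N%:R / M)).
rewrite (_ : M * M ^+ t * (E * F) = M ^+ t * E * (M * F)); last by ring.
apply: ler_wpM2l; first by rewrite mulr_ge0 ?exprn_ge0 ?expR_ge0 // ltW.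
have h := expR_ge1Dx (- ((2 * t)%N%:R / M)).
apply: le_trans (ler_wpM2l (ltW M0) h).
rewrite mulrDr mulr1 mulrN mulrCA mulfV ?mulr1; last by rewrite gt_eqF.
rewrite natrB; last by lia.
by rewrite /M.
Qed.

Theorem mainTheorem1 (R : realType) (k n : nat) (Hstar : {set {set 'I_n}}) (t : nat) :
  (1 <= k)%N -> ~~ odd (k * n) -> kfactor k Hstar -> (t <= (k * n) %/ 2)%N ->
  let N := #|[set H : {set {set 'I_n}} | kfactor k H & #|symdiff H Hstar| == (2 * t)%N]| in
  let m := ((k * n) %/ 2)%N in
  [/\ (N%:R : R) <= ('C(m, t)%:R : R) * (((2 * t)`!)%:R / (2 ^ t * t`!)%:R),
      ('C(m, t)%:R : R) * (((2 * t)`!)%:R / (2 ^ t * t`!)%:R)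
        <= ('C(m, t)%:R : R) * (2 ^ t * t`!)%:R
    & ('C(m, t)%:R : R) * (2 ^ t * t`!)%:R
        <= ((k * n)%:R : R) ^+ t * expR (- ((t * (t - 1))%:R / (k * n)%:R))].
Proof.
move=> k1 Hodd kHs tm N m.
have Hkn : (k * n = 2 * m)%N.
  by rewrite /m divn2 -{1}(odd_double_half (k * n)) (negbTE Hodd) add0n -muln2 mulnC.
have cHs : #|Hstar| = m.
  by apply/eqP; rewrite -(eqn_pmul2l (isT : (0 < 2)%N)) (handshake _ _ _ kHs) Hkn.
have cb := count_bound _ _ _ t kHs; rewrite cHs -/N in cb.
have P0 : ((2 ^ t * t`!)%N%:R : R) != 0 by rewrite pnatr_eq0 -lt0n muln_gt0 expn_gt0 fact_gt0.
have -> : ((2 * t)`!)%:R / (2 ^ t * t`!)%:R = (dfact t)%:R :> R.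
  by rewrite dfact_fact natrM mulfK.
split.
- by rewrite -natrM ler_nat.
- by apply: ler_wpM2l; [exact: ler0n | rewrite ler_nat dfact_le].
- rewrite -natrM mulnCA bin_ffact Hkn.
  exact: part3.
Qed.
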